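(* If a finite connected interval graph $G$ is balanced and $p$-critical (for some $p\ge1$), then $G$ has exactly one basepoint.
   Context: An interval graph is a finite simple graph whose vertices can be assigned (closed, bounded) real intervals $I_v$ so that $v,w$ are adjacent iff $I_v\cap I_w\ne\emptyset$. For such a representation $\alpha$, $\mathrm{imp}_\alpha(z)$ is the number of intervals $I_w$, $w\ne z$, with $I_w\subseteq I_z$; $\mathrm{imp}(\alpha)=\max_z\mathrm{imp}_\alpha(z)$; and the impropriety $\mathrm{imp}(G)$ is the minimum of $\mathrm{imp}(\alpha)$ over all representations. A local component at $z$ is a connected component of $G\setminus\{z\}$; it is exterior iff it contains a vertex not adjacent to $z$. If $z$ has $n$ local components, $\mathrm{wt}(z)$ is the sum of the $n-2$ smallest orders among the non-exterior local components at $z$ ($0$ if $n\le2$), and $\mathrm{wt}(G)=\max_z \mathrm{wt}(z)$. $G$ is balanced iff $\mathrm{wt}(G)=\mathrm{imp}(G)$. If $G$ is balanced, a basepoint of $G$ is a vertex $z$ with $\mathrm{wt}(z)=\mathrm{imp}(G)$. For $p>0$, $G$ is $p$-critical iff $\mathrm{imp}(G)=p$ and every proper induced subgraph of $G$ has impropriety strictly less than $p$. *)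

(* Defs.v *)
From Stdlib Require Import Reals.
From mathcomp Require Import all_boot.

Set Implicit Arguments.
Unset Strict Implicit.
Unset Printing Implicit Defensive.

Definition Rleb (a b : R) : bool := if Rle_dec a b then true else false.

(* A graph is [e : rel T] on a finite type [T] (symmetric, irreflexive).
   Induced subgraph on a vertex set [S] is handled by relativising to [S]. *)
Definition is_rep (T : finType) (S : {set T}) (e : rel T) (l r : T -> R) : Prop :=
  (forall v, v \in S -> Rle (l v) (r v)) /\
  (forall v w, v \in S -> w \in S -> v != w ->
     (e v w <-> exists x : R, (Rle (l v) x /\ Rle x (r v)) /\ (Rle (l w) x /\ Rle x (r w)))).

(* I_w is contained in I_z (for nonempty closed intervals) *)
Definition sub_int (T : finType) (l r : T -> R) (w z : T) : bool :=
  Rleb (l z) (l w) && Rleb (r w) (r z).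

Definition imp_at (T : finType) (S : {set T}) (l r : T -> R) (z : T) : nat :=
  #|[set w in S | (w != z) && sub_int l r w z]|.

Definition imp_rep (T : finType) (S : {set T}) (l r : T -> R) : nat :=
  \max_(z in S) imp_at S l r z.

Definition has_imp (T : finType) (S : {set T}) (e : rel T) (p : nat) : Prop :=
  (exists l r, is_rep S e l r /\ imp_rep S l r = p) /\
  (forall l r, is_rep S e l r -> p <= imp_rep S l r).

Definition interval_graph (T : finType) (e : rel T) : Prop :=
  exists l r, is_rep [set: T] e l r.

Definition connected_graph (T : finType) (e : rel T) : Prop :=
  forall x y, connect e x y.

Definition del_rel (T : finType) (e : rel T) (z : T) : rel T :=
  fun x y => [&& e x y, x != z & y != z].

Definition local_comp (T : finType) (e : rel T) (z x : T) : {set T} :=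
  [set y | (y != z) && connect (del_rel e z) x y].

Definition local_comps (T : finType) (e : rel T) (z : T) : {set {set T}} :=
  [set local_comp e z x | x in [set~ z]].

Definition exterior (T : finType) (e : rel T) (z : T) (C : {set T}) : bool :=
  [exists y in C, ~~ e z y].

Definition wt (T : finType) (e : rel T) (z : T) : nat :=
  sumn (take (#|local_comps e z| - 2)
    (sort leq [seq #|pred_of_set C| | C : {set T} <- enum [set C in local_comps e z | ~~ exterior e z C]])).

Definition wtG (T : finType) (e : rel T) : nat := \max_(z : T) wt e z.

Definition balanced (T : finType) (e : rel T) : Prop := has_imp [set: T] e (wtG e).

Definition basepoint (T : finType) (e : rel T) (z : T) : Prop :=
  balanced e /\ has_imp [set: T] e (wt e z).

Definition critical (T : finType) (e : rel T) (p : nat) : Prop :=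
  0 < p /\ has_imp [set: T] e p /\
  (forall S : {set T}, S \proper [set: T] -> forall q, has_imp S e q -> q < p).

(* Main.v *)
Require Import Defs.
From Stdlib Require Import Reals Lra Classical.
From mathcomp Require Import all_boot zify.

Set Implicit Arguments.
Unset Strict Implicit.
Unset Printing Implicit Defensive.

Lemma mem_sumn (y : nat) (t : seq nat) : y \in t -> y <= sumn t.
Proof.
elim: t => [//|a t IH] /=; rewrite inE => /orP [/eqP ->|/IH H].
  exact: leq_addr.
by apply: (leq_trans H); exact: leq_addl.
Qed.

Lemma sumn_take_le (L : seq nat) k : sumn (take k L) <= sumn L.
Proof.
by rewrite -{2}(cat_take_drop k L) sumn_cat leq_addr.
Qed.

Lemma sum_take_sort (L : seq nat) k x :
  k < size L -> x \in L -> sumn (take k (sort leq L)) + x <= sumn L.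
Proof.
move=> hk hx.
set s := sort leq L.
have ps : perm_eq s L by rewrite perm_sort perm_refl.
have hs : size s = size L by exact: perm_size.
rewrite -(perm_sumn ps) -{2}(cat_take_drop k s) sumn_cat leq_add2l.
have xs : x \in s by rewrite (perm_mem ps).
have ss : sorted leq s by apply: sort_sorted; exact: leq_total.
set j := (size s).-1.
have hj : j < size s by rewrite /j hs prednK ?(leq_ltn_trans _ hk).
have hi : index x s < size s by rewrite index_mem.
have le1 : x <= nth 0 s j.
  rewrite -{1}(nth_index 0 xs).
  apply: (sorted_leq_nth leq_trans leqnn 0 ss); rewrite ?inE //.
  by rewrite /j -ltnS prednK // (leq_ltn_trans _ hi).
apply: (leq_trans le1); apply: mem_sumn.
have kj : k <= j by rewrite /j -ltnS prednK hs // (leq_ltn_trans _ hk).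
have -> : nth 0 s j = nth 0 (drop k s) (j - k) by rewrite nth_drop subnKC.
apply: mem_nth; rewrite size_drop.
rewrite /j; move: hj hk; rewrite /j hs; lia.
Qed.

Section Graph.
Variables (T : finType) (e : rel T).
Hypotheses (esym : symmetric e) (eirr : irreflexive e).

Lemma del_sym z : symmetric (del_rel e z).
Proof.
move=> x y; rewrite /del_rel esym.
by case: (x != z); case: (y != z); rewrite ?andbF ?andbT.
Qed.

Lemma csym z : connect_sym (del_rel e z).
Proof. exact: sym_connect_sym (del_sym z). Qed.

Lemma lcE z x y : (y \in local_comp e z x) = (y != z) && connect (del_rel e z) x y.
Proof. by rewrite inE. Qed.

Lemma lc_eq z x y : connect (del_rel e z) x y -> local_comp e z x = local_comp e z y.
Proof.
move=> hxy; apply/setP => w; rewrite !lcE.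
by rewrite (same_connect (csym z) hxy).
Qed.

Lemma lc_self z x : x != z -> x \in local_comp e z x.
Proof. by move=> h; rewrite lcE h connect0. Qed.

Lemma lcs_form z C : C \in local_comps e z -> exists2 c, c != z & C = local_comp e z c.
Proof. by case/imsetP => c; rewrite !inE => h ->; exists c. Qed.

Lemma lc_in_lcs z c : c != z -> local_comp e z c \in local_comps e z.
Proof. by move=> h; apply: imset_f; rewrite !inE. Qed.

Lemma lcs_neq z C w : C \in local_comps e z -> w \in C -> w != z.
Proof. by case/lcs_form => c _ -> ; rewrite lcE => /andP []. Qed.

Lemma lcs_of z C w : C \in local_comps e z -> w \in C -> C = local_comp e z w.
Proof.
case/lcs_form => c _ ->; rewrite lcE => /andP [_ h]; exact: lc_eq.
Qed.

Lemma comps_eq z C C' w w' : C \in local_comps e z -> C' \in local_comps e z ->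
  w \in C -> w' \in C' -> (w = w' \/ e w w') -> C = C'.
Proof.
move=> hC hC' hw hw' hor.
rewrite (lcs_of hC hw) (lcs_of hC' hw'); apply: lc_eq.
case: hor => [->|h]; first exact: connect0.
apply: connect1; rewrite /del_rel h (lcs_neq hC hw) (lcs_neq hC' hw') //.
Qed.

Lemma conn_mono (r r' : rel T) (P : T -> Prop) x :
  (forall a b, P a -> r a b -> r' a b /\ P b) -> P x ->
  forall y, connect r x y -> connect r' x y.
Proof.
move=> hP px y /connectP [s hs ->]; elim: s x px hs => [|a s IH] x px /=.
  by move=> _; exact: connect0.
case/andP => hxa hs; have [h1 h2] := hP _ _ px hxa.
exact: (connect_trans (connect1 h1) (IH a h2 hs)).
Qed.

Lemma reach_nb x z : x != z -> connect e x z ->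
  exists u, connect (del_rel e z) x u /\ e u z.
Proof.
move=> hxz /connectP [s hs hl]; elim: s x hxz hs hl => [|a s IH] x hxz /=.
  by move=> _ h; rewrite h eqxx in hxz.
case/andP => hxa hs hl.
case: (eqVneq a z) => haz.
  by exists x; split; [exact: connect0 | rewrite -haz].
have [u [h1 h2]] := IH a haz hs hl.
exists u; split => //; apply: connect_trans h1; apply: connect1.
by rewrite /del_rel hxa hxz haz.
Qed.

Lemma path_split (r : rel T) (P : pred T) u s :
  path r u s -> P u -> ~~ P (last u s) ->
  exists a b, [/\ r a b, P a, ~~ P b & connect r u a].
Proof.
elim: s u => [|c s IH] u /=; first by move=> _ ->.
case/andP => huc hs pu hl.
case pc: (P c).
  have [a [b [h1 h2 h3 h4]]] := IH c hs pc hl.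
  by exists a, b; split => //; exact: connect_trans (connect1 huc) h4.
by exists u, c; rewrite pc; split => //; exact: connect0.
Qed.

End Graph.

Lemma RlebP a b : Rleb a b = true <-> Rle a b.
Proof. rewrite /Rleb; case: Rle_dec => //. Qed.

Definition cont (T : Type) (l r : T -> R) (w : T) (t : R) : Prop := Rle (l w) t /\ Rle t (r w).

Section Geo.
Variables (T : finType) (e : rel T) (S : {set T}) (l r : T -> R).
Hypothesis hrep : is_rep S e l r.

Lemma rep_adj v w : v \in S -> w \in S -> v != w ->
  (e v w <-> exists x : R, (Rle (l v) x /\ Rle x (r v)) /\ (Rle (l w) x /\ Rle x (r w))).
Proof. by case: hrep => _ h; exact: h. Qed.

Lemma rep_le v : v \in S -> Rle (l v) (r v).
Proof. by case: hrep => h _; exact: h. Qed.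

Lemma geo1 z w : z \in S -> w \in S -> w != z -> e z w ->
  sub_int l r w z \/ cont l r w (l z) \/ cont l r w (r z).
Proof.
move=> hz hw hwz hzw.
have hzw' : z != w by rewrite eq_sym.
have [x [[h1 h2] [h3 h4]]] := proj1 (rep_adj hz hw hzw') hzw.
rewrite /sub_int /cont.
case E1: (Rleb (l z) (l w)); case E2: (Rleb (r w) (r z)) => /=; [by left|right..].
- move: E1 => /RlebP E1; have E2' : ~ Rle (r w) (r z) by move=> /RlebP; rewrite E2.
  right; lra.
- have E1' : ~ Rle (l z) (l w) by move=> /RlebP; rewrite E1.
  left; lra.
- have E1' : ~ Rle (l z) (l w) by move=> /RlebP; rewrite E1.
  left; lra.
Qed.

Lemma geo2 w w' t : w \in S -> w' \in S -> cont l r w t -> cont l r w' t -> w = w' \/ e w w'.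
Proof.
move=> hw hw' [h1 h2] [h3 h4]; case: (eqVneq w w') => h; [by left|right].
by apply/(rep_adj hw hw' h); exists t.
Qed.

Lemma geo3 z x y : z \in S -> x \in S -> y \in S -> y != z -> x != z -> x != y ->
  ~~ e z y -> e z x -> e x y -> cont l r x (l z) \/ cont l r x (r z).
Proof.
move=> hz hx hy hyz hxz hxy nzy ezx exy.
have hzy : z != y by rewrite eq_sym.
have hzx : z != x by rewrite eq_sym.
have [p1 [[a1 a2] [a3 a4]]] := proj1 (rep_adj hz hx hzx) ezx.
have [p2 [[b1 b2] [b3 b4]]] := proj1 (rep_adj hx hy hxy) exy.
have lz := rep_le hz; have ly := rep_le hy.
have nov : ~ (exists t : R, (Rle (l z) t /\ Rle t (r z)) /\ (Rle (l y) t /\ Rle t (r y))).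
  by move=> /(rep_adj hz hy hzy) h; rewrite h in nzy.
rewrite /cont.
destruct (Rle_dec (l y) (r z)) as [c1|c1]; destruct (Rle_dec (l z) (r y)) as [c2|c2].
- exfalso; apply: nov.
  destruct (Rle_dec (l y) (l z)) as [c3|c3].
  + exists (l z); lra.
  + exists (l y); lra.
- left; lra.
- right; lra.
- right; lra.
Qed.

End Geo.

Section Bound.
Variables (T : finType) (e : rel T).
Hypotheses (esym : symmetric e) (eirr : irreflexive e).

Lemma nonextP z (C : {set T}) : ~~ exterior e z C -> forall w, w \in C -> e z w.
Proof.
rewrite /exterior negb_exists_in => /forall_inP h w hw.
by move: (h w hw); rewrite negbK.
Qed.

Lemma extP z (C : {set T}) y : y \in C -> ~~ e z y -> exterior e z C.
Proof. by move=> hy hn; apply/existsP; exists y; rewrite hy. Qed.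

Lemma bound z S l r Q x y Q2 x2 y2 :
 is_rep S e l r -> z \in S ->
 Q \in local_comps e z -> x \in Q -> y \in Q -> x \in S -> y \in S ->
 e z x -> ~~ e z y -> e x y ->
 Q2 \in local_comps e z -> x2 \in Q2 -> y2 \in Q2 -> x2 \in S -> y2 \in S ->
 e z x2 -> ~~ e z y2 -> e x2 y2 ->
 (forall C, C \in local_comps e z -> ~~ exterior e z C -> C \subset S) ->
 (Q2 = Q -> local_comps e z \subset
     [set C in local_comps e z | ~~ exterior e z C] :|: [set Q]) ->
 wt e z <= imp_at S l r z.
Proof.
move=> hrep hz hQ hxQ hyQ hxS hyS ezx nzy exy hQ2 hx2 hy2 hx2S hy2S ezx2 nzy2 exy2 hsub hcase.
set D := [set C in local_comps e z | ~~ exterior e z C].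
set A := [set w in S | (w != z) && sub_int l r w z].
have QnD : Q \notin D by rewrite inE (extP hyQ nzy) andbF.
have Q2nD : Q2 \notin D by rewrite inE (extP hy2 nzy2) andbF.
have xz : x != z := lcs_neq hQ hxQ.
have yz : y != z := lcs_neq hQ hyQ.
have xy : x != y by apply/eqP => h; rewrite h eirr in exy.
have x2z : x2 != z := lcs_neq hQ2 hx2.
have y2z : y2 != z := lcs_neq hQ2 hy2.
have x2y2 : x2 != y2 by apply/eqP => h; rewrite h eirr in exy2.
have cx := geo3 hrep hz hxS hyS yz xz xy nzy ezx exy.
have cx2 := geo3 hrep hz hx2S hy2S y2z x2z x2y2 nzy2 ezx2 exy2.
have inD C : C \in D -> C \in local_comps e z /\ ~~ exterior e z C.
  by rewrite inE => /andP.
have key C w : C \in D -> w \in C -> w \notin A ->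
    cont l r w (l z) \/ cont l r w (r z).
  move=> /inD [hC hne] hw hwA.
  have wS : w \in S by exact: (subsetP (hsub C hC hne)).
  have wz := lcs_neq hC hw.
  case: (geo1 hrep hz wS wz (nonextP hne hw)) => [hs|//].
  by move: hwA; rewrite inE wS wz hs.
have conflict C w Q' x' t : C \in D -> w \in C -> Q' \in local_comps e z -> Q' \notin D ->
    x' \in Q' -> x' \in S -> cont l r w t -> cont l r x' t -> False.
  move=> hCD hw hQ' hQ'D hx' hx'S cw cx'.
  have [hC hne] := inD C hCD.
  have wS : w \in S by exact: (subsetP (hsub C hC hne)).
  have E := comps_eq esym hC hQ' hw hx' (geo2 hrep wS hx'S cw cx').
  by rewrite -E hCD in hQ'D.
set D' := [set C in D | ~~ (C \subset A)].
have D'D : D' \subset D by apply/subsetP => C; rewrite inE => /andP [].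
have cov : \sum_(C in D :\: D') #|C| <= imp_at S l r z.
  have triv : trivIset (D :\: D').
    apply/trivIsetP => C C' hC hC' hne.
    apply/pred0P => w /=; apply/negP => /andP [h1 h2].
    move: hC hC'; rewrite !inE => /andP [_ /andP [hC _]] /andP [_ /andP [hC' _]].
    by rewrite (comps_eq esym hC hC' h1 h2 (or_introl erefl)) eqxx in hne.
  rewrite (eqP triv) /imp_at; apply: subset_leq_card.
  apply/subsetP => w /bigcupP [C]; rewrite !inE => /andP [hC1 hC2] hw.
  move: hC1; rewrite hC2 /= negbK => /subsetP h.
  by move: (h w hw); rewrite inE.
set L := [seq #|pred_of_set C| | C <- enum D].
have sL : sumn L = \sum_(C in D) #|C| by rewrite sumnE big_map big_enum.
have split : \sum_(C in D) #|C| = \sum_(C in D') #|C| + \sum_(C in D :\: D') #|C|.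
  by rewrite (big_setID D'); congr (_ + _); apply: eq_bigl => C; rewrite (setIidPr D'D).
suff : wt e z + \sum_(C in D') #|C| <= \sum_(C in D) #|C|.
  by rewrite split addnC leq_add2l => h; exact: leq_trans h cov.
case: (set_0Vmem D') => [D'0 | [C0 hC0]].
  rewrite D'0 big_set0 addn0 -sL /wt; apply: leq_trans (sumn_take_le _ _) _.
  by rewrite (perm_sumn (s1 := sort leq L) (s2 := L)) // perm_sort perm_refl.
have hC0D : C0 \in D by exact: (subsetP D'D).
have [w0 hw0 hw0A] : exists2 w, w \in C0 & w \notin A.
  move: hC0; rewrite inE => /andP [_ /subsetPn [w h1 h2]]; by exists w.
case: (eqVneq Q2 Q) => hQQ; last first.
  exfalso.
  case: cx => cx; case: cx2 => cx2.
  - have := comps_eq esym hQ hQ2 hxQ hx2 (geo2 hrep hxS hx2S cx cx2).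
    by move=> E; rewrite E eqxx in hQQ.
  - case: (key _ _ hC0D hw0 hw0A) => cw.
    + exact: (conflict _ _ _ _ _ hC0D hw0 hQ QnD hxQ hxS cw cx).
    + exact: (conflict _ _ _ _ _ hC0D hw0 hQ2 Q2nD hx2 hx2S cw cx2).
  - case: (key _ _ hC0D hw0 hw0A) => cw.
    + exact: (conflict _ _ _ _ _ hC0D hw0 hQ2 Q2nD hx2 hx2S cw cx2).
    + exact: (conflict _ _ _ _ _ hC0D hw0 hQ QnD hxQ hxS cw cx).
  - have := comps_eq esym hQ hQ2 hxQ hx2 (geo2 hrep hxS hx2S cx cx2).
    by move=> E; rewrite E eqxx in hQQ.
have D'1 : D' = [set C0].
  apply/setP => C; rewrite inE; apply/idP/eqP => [hC|->//].
  have hCD : C \in D by exact: (subsetP D'D).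
  have [w hw hwA] : exists2 w, w \in C & w \notin A.
    move: hC; rewrite inE => /andP [_ /subsetPn [w h1 h2]]; by exists w.
  have [hCc _] := inD C hCD; have [hC0c _] := inD C0 hC0D.
  have wS : w \in S by move: hCD; rewrite inE => /andP [h1 h2]; exact: (subsetP (hsub C h1 h2)).
  have w0S : w0 \in S by move: hC0D; rewrite inE => /andP [h1 h2]; exact: (subsetP (hsub C0 h1 h2)).
  case: cx => cx.
  - case: (key _ _ hCD hw hwA) => cw; first by case: (conflict _ _ _ _ _ hCD hw hQ QnD hxQ hxS cw cx).
    case: (key _ _ hC0D hw0 hw0A) => cw0; first by case: (conflict _ _ _ _ _ hC0D hw0 hQ QnD hxQ hxS cw0 cx).
    exact: (comps_eq esym hCc hC0c hw hw0 (geo2 hrep wS w0S cw cw0)).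
  - case: (key _ _ hCD hw hwA) => cw; last by case: (conflict _ _ _ _ _ hCD hw hQ QnD hxQ hxS cw cx).
    case: (key _ _ hC0D hw0 hw0A) => cw0; last by case: (conflict _ _ _ _ _ hC0D hw0 hQ QnD hxQ hxS cw0 cx).
    exact: (comps_eq esym hCc hC0c hw hw0 (geo2 hrep wS w0S cw cw0)).
rewrite D'1 big_set1 -sL /wt.
apply: sum_take_sort; last first.
  by apply/mapP; exists C0; rewrite ?mem_enum.
rewrite size_map -cardE.
have h1 : #|local_comps e z| <= #|D :|: [set Q]| by apply: subset_leq_card; exact: hcase.
have h2 : #|D :|: [set Q]| <= #|D| + 1 by rewrite setUC cardsU1 addnC leq_add2l leq_b1.
have h3 : 0 < #|D| by apply/card_gt0P; exists C0.
apply: (leq_ltn_trans (leq_sub2r 2 (leq_trans h1 h2))).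
move: (#|D|) h3 => k hk; clear -hk; lia.
Qed.

End Bound.

Lemma ex_min (P : nat -> Prop) : (exists n, P n) -> exists m, P m /\ forall k, P k -> m <= k.
Proof.
move=> [n0 Pn]; apply: NNPP => H.
suff: forall n k, k <= n -> ~ P k by move/(_ n0 n0 (leqnn n0)).
elim=> [|n IH] k hk Pk.
  by apply: H; exists k; split => // j _; move: hk; rewrite leqn0 => /eqP ->.
apply: H; exists k; split => // j Pj; rewrite leqNgt; apply/negP => hjk.
by apply: (IH j _ Pj); rewrite -ltnS (leq_trans hjk hk).
Qed.

Section Main.
Variables (T : finType) (e : rel T).
Hypotheses (esym : symmetric e) (eirr : irreflexive e) (hconn : connected_graph e).

Lemma rep_restrict S l r : is_rep [set: T] e l r -> is_rep S e l r.
Proof.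
case=> h1 h2; split; first by move=> v _; apply: h1; rewrite inE.
by move=> v w _ _ hvw; apply: h2; rewrite ?inE.
Qed.

Lemma has_imp_uniq S q1 q2 : has_imp S e q1 -> has_imp S e q2 -> q1 = q2.
Proof.
move=> [[l1 [r1 [h1 i1]]] m1] [[l2 [r2 [h2 i2]]] m2].
apply/eqP; rewrite eqn_leq; apply/andP; split.
  by rewrite -i2; exact: m1.
by rewrite -i1; exact: m2.
Qed.

Lemma wt_pos_comps z : 0 < wt e z -> 2 < #|local_comps e z|.
Proof.
move=> hp; case: (leqP #|local_comps e z| 2) => // h.
move: hp; rewrite /wt.
have -> : #|local_comps e z| - 2 = 0 by apply/eqP; rewrite subn_eq0.
by rewrite take0.
Qed.

Lemma wt0 z c : (forall w, w != z -> connect (del_rel e z) w c) -> wt e z = 0.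
Proof.
move=> h.
have sub : local_comps e z \subset [set local_comp e z c].
  apply/subsetP => C /lcs_form [w hw ->]; rewrite inE; apply/eqP.
  exact: (lc_eq esym (h w hw)).
have := subset_leq_card sub; rewrite cards1 => h1.
rewrite /wt.
have -> : #|local_comps e z| - 2 = 0 by apply/eqP; rewrite subn_eq0 (leq_trans h1).
by rewrite take0.
Qed.

Lemma edge_in z Q y : Q \in local_comps e z -> y \in Q -> ~~ e z y ->
  exists a b, [/\ a \in Q, b \in Q, e z a, ~~ e z b & e a b].
Proof.
move=> hQ hy nzy.
have yz := lcs_neq hQ hy.
have [u [hyu euz]] := reach_nb yz (hconn y z).
have : connect (del_rel e z) u y by rewrite (csym esym).
move=> /connectP [s hs hl].
have pu : e z u by rewrite esym.
have := path_split hs (P := e z) pu; rewrite -hl => /(_ nzy) [a [b [dab za nzb hua]]].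
move: dab; rewrite /del_rel => /and3P [eab az bz].
have QE := lcs_of esym hQ hy.
exists a, b; split => //.
- by rewrite QE lcE az (connect_trans hyu hua).
- rewrite QE lcE bz (connect_trans hyu (connect_trans hua (connect1 _))) //.
  by rewrite /del_rel eab az bz.
Qed.

Lemma avoid z' w a : w != z' -> w \notin local_comp e z' a -> forall b,
  connect (del_rel e z') w b -> b != a.
Proof.
move=> wz' hw b hb; apply/eqP => E; subst b.
move: hw; rewrite lcE wz' /= (csym esym) hb.
by [].
Qed.

Lemma cross z z' w : z' != z -> w != z' -> w \notin local_comp e z' z ->
  w \in local_comp e z z'.
Proof.
move=> zz wz' hw.
have hav := avoid wz' hw.
have wz : w != z by apply: hav; exact: connect0.
have [u [hwu euz]] := reach_nb wz' (hconn w z').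
have : connect (del_rel e z) w u.
  apply: (conn_mono (P := fun a => connect (del_rel e z') w a) _ (connect0 _ w) hwu).
  move=> a b ha hab; split; last exact: connect_trans ha (connect1 hab).
  move: (hab); rewrite /del_rel => /and3P [eab _ _].
  by rewrite eab (hav a ha) (hav b (connect_trans ha (connect1 hab))).
move=> hwu'.
have uz := hav u hwu.
have : connect (del_rel e z) w z'.
  by apply: connect_trans hwu' (connect1 _); rewrite /del_rel euz uz zz.
by rewrite lcE wz (csym esym).
Qed.

Lemma Q_nonext z z' : z' != z -> (forall w, w \in local_comp e z z' -> e z w) -> wt e z' = 0.
Proof.
move=> zz hQ; apply: (wt0 (c := z)) => w wz'.
have zz' : z != z' by rewrite eq_sym.
case: (eqVneq w z) => [->|wz]; first exact: connect0.
case hwQ: (w \in local_comp e z z').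
  by apply: connect1; rewrite /del_rel esym (hQ w hwQ) wz' zz'.
have hav : forall b, connect (del_rel e z) w b -> b != z'.
  move=> b hb; apply/eqP => E; subst b; move: hwQ.
  by rewrite lcE wz (csym esym) hb.
have [u [hwu euz]] := reach_nb wz (hconn w z).
have hwu' : connect (del_rel e z') w u.
  apply: (conn_mono (P := fun a => connect (del_rel e z) w a) _ (connect0 _ w) hwu).
  move=> a b ha hab; split; last exact: connect_trans ha (connect1 hab).
  move: (hab); rewrite /del_rel => /and3P [eab _ _].
  by rewrite eab (hav a ha) (hav b (connect_trans ha (connect1 hab))).
by apply: connect_trans hwu' (connect1 _); rewrite /del_rel euz (hav u hwu) zz'.
Qed.

End Main.

Lemma three_out (T : finType) (u v w : T) : u != w -> v != w -> u != v -> forall a b,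
  exists2 t, (t == u) || (t == v) || (t == w) & t \notin [set a; b].
Proof.
move=> uw vw uv a b.
case: (boolP (u \in [set a; b])) => hu; last by exists u; rewrite ?eqxx.
case: (boolP (v \in [set a; b])) => hv; last by exists v; rewrite ?eqxx ?orbT.
case: (boolP (w \in [set a; b])) => hw; last by exists w; rewrite ?eqxx ?orbT.
exfalso; move: hu hv hw uw vw uv; rewrite !inE.
by move=> /orP [/eqP->|/eqP->] /orP [/eqP->|/eqP->] /orP [/eqP->|/eqP->]; rewrite ?eqxx.
Qed.

Section Final.
Variables (T : finType) (e : rel T).
Hypotheses (esym : symmetric e) (eirr : irreflexive e) (hconn : connected_graph e).

Lemma finish (p : nat) z Q a b Q2 x2 y2 :
 critical e p -> interval_graph e -> wt e z = p ->
 Q \in local_comps e z -> a \in Q -> b \in Q -> e z a -> ~~ e z b -> e a b ->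
 Q2 \in local_comps e z -> x2 \in Q2 -> y2 \in Q2 -> e z x2 -> ~~ e z y2 -> e x2 y2 ->
 (Q2 = Q -> [/\ x2 = a, y2 = b & local_comps e z \subset
     [set C in local_comps e z | ~~ exterior e z C] :|: [set Q]]) ->
 (exists2 w, w \in Q & w \notin [set a; b]) -> False.
Proof.
move=> [hp0 [_ hcrit]] [l [r hrep]] hwt hQ haQ hbQ eza nzb eab hQ2 hx2 hy2 ezx2 nzy2 exy2 hcase [w0 hw0Q hw0].
set S := [set w | ((w \in Q) ==> (w \in [set a; b])) && ((w \in Q2) ==> (w \in [set x2; y2]))].
have QQ2 w : w \in Q -> w \in Q2 -> Q2 = Q.
  by move=> h1 h2; symmetry; exact: (comps_eq esym hQ hQ2 h1 h2 (or_introl erefl)).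
have inS w : (w \in Q -> w \in [set a; b]) -> (w \in Q2 -> w \in [set x2; y2]) -> w \in S.
  by move=> h1 h2; rewrite inE; apply/andP; split; apply/implyP.
have aS : a \in S.
  apply: inS => [_|h]; first by rewrite !inE eqxx.
  by have [-> _ _] := hcase (QQ2 a haQ h); rewrite !inE eqxx.
have bS : b \in S.
  apply: inS => [_|h]; first by rewrite !inE eqxx orbT.
  by have [_ -> _] := hcase (QQ2 b hbQ h); rewrite !inE eqxx orbT.
have x2S : x2 \in S.
  apply: inS => [h|_]; last by rewrite !inE eqxx.
  by have [-> _ _] := hcase (QQ2 x2 h hx2); rewrite !inE eqxx.
have y2S : y2 \in S.
  apply: inS => [h|_]; last by rewrite !inE eqxx orbT.
  by have [_ -> _] := hcase (QQ2 y2 h hy2); rewrite !inE eqxx orbT.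
have zS : z \in S.
  apply: inS => h.
    by have := lcs_neq hQ h; rewrite eqxx.
  by have := lcs_neq hQ2 h; rewrite eqxx.
have hsub C : C \in local_comps e z -> ~~ exterior e z C -> C \subset S.
  move=> hC hne; apply/subsetP => w hw; apply: inS => h.
    have E := comps_eq esym hC hQ hw h (or_introl erefl).
    by move: hne; rewrite E (extP hbQ nzb).
  have E := comps_eq esym hC hQ2 hw h (or_introl erefl).
  by move: hne; rewrite E (extP hy2 nzy2).
have Sprop : S \proper [set: T].
  rewrite properT; apply/eqP => E.
  have : w0 \in S by rewrite E inE.
  by rewrite inE hw0Q (negbTE hw0).
have hrepS : is_rep S e l r := rep_restrict S hrep.
have [m [[l' [r' [hrep' him]]] hmin]] :=
  ex_min (P := fun n => exists l r, is_rep S e l r /\ imp_rep S l r = n)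
    (ex_intro _ (imp_rep S l r) (ex_intro _ l (ex_intro _ r (conj hrepS erefl)))).
have hm : has_imp S e m.
  split; first by exists l', r'.
  by move=> l1 r1 h1; apply: hmin; exists l1, r1.
have := hcrit S Sprop m hm.
have hb := bound esym eirr hrep' zS hQ haQ hbQ aS bS eza nzb eab hQ2 hx2 hy2 x2S y2S ezx2 nzy2 exy2 hsub
  (fun E => let: And3 _ _ h := hcase E in h).
have hmax : imp_at S l' r' z <= imp_rep S l' r' by apply: (leq_bigmax_cond (P := fun z => z \in S)).
rewrite -him -hwt ltnNge.
by rewrite (leq_trans hb hmax).
Qed.

Lemma main p z z' : critical e p -> interval_graph e -> wt e z = p -> z' != z -> 0 < wt e z' ->
  forall w, w \in local_comp e z z' -> e z w.
Proof.
move=> hcr hig hwt zz hpos.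
set Q := local_comp e z z'.
case E: [forall w in Q, e z w]; first by move/forall_inP: E.
exfalso.
move/negbT: E; rewrite negb_forall_in => /exists_inP [y hyQ nzy].
have hQ : Q \in local_comps e z by exact: lc_in_lcs.
have [a [b [haQ hbQ eza nzb eab]]] := edge_in esym hconn hQ hyQ nzy.
have hw : exists2 w, w \in Q & w \notin [set a; b].
  have h3 := wt_pos_comps hpos.
  set P := local_comp e z' z.
  have zz' : z != z' by rewrite eq_sym.
  have hP : P \in local_comps e z' by exact: lc_in_lcs.
  have h2 : 1 < #|local_comps e z' :\ P|.
    move: h3; rewrite (cardsD1 P) hP; by [].
  have [C1 [C2 [hC1 hC2 hC12]]] := card_gt1P h2.
  move: hC1 hC2; rewrite !inE => /andP [hC1P hC1] /andP [hC2P hC2].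
  have [w1 w1z C1E] := lcs_form hC1.
  have [w2 w2z C2E] := lcs_form hC2.
  have hw1 : w1 \in C1 by rewrite C1E lc_self.
  have hw2 : w2 \in C2 by rewrite C2E lc_self.
  have nP w C : C \in local_comps e z' -> C != P -> w \in C -> w \notin P.
    move=> hC hCP hwC; apply/negP => hwP.
    by rewrite (comps_eq esym hC hP hwC hwP (or_introl erefl)) eqxx in hCP.
  have q1 : w1 \in Q := cross esym hconn zz w1z (nP _ _ hC1 hC1P hw1).
  have q2 : w2 \in Q := cross esym hconn zz w2z (nP _ _ hC2 hC2P hw2).
  have qz : z' \in Q by rewrite lc_self.
  have w12 : w1 != w2.
    apply/eqP => E; subst w2.
    by rewrite (comps_eq esym hC1 hC2 hw1 hw2 (or_introl erefl)) eqxx in hC12.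
  have [t ht htn] := three_out w1z w2z w12 a b.
  by exists t => //; move: ht => /orP [/orP [/eqP -> | /eqP ->] | /eqP ->].
case: (boolP [exists Q2 in local_comps e z, (Q2 != Q) && exterior e z Q2]).
  move=> /exists_inP [Q2 hQ2 /andP [hQQ /existsP [y2 /andP [hy2 nzy2]]]].
  have [x2' [y2' [hx2' hy2' ezx2 nzy2' exy2]]] := edge_in esym hconn hQ2 hy2 nzy2.
  apply: (finish hcr hig hwt hQ haQ hbQ eza nzb eab hQ2 hx2' hy2' ezx2 nzy2' exy2 _ hw).
  by move=> E; rewrite E eqxx in hQQ.
rewrite negb_exists_in => /forall_inP hno.
apply: (finish hcr hig hwt hQ haQ hbQ eza nzb eab hQ haQ hbQ eza nzb eab _ hw).
move=> _; split => //; apply/subsetP => C hC.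
rewrite !inE hC /=.
case: (eqVneq C Q) => [_|hCQ]; first by apply/orP; right.
by move: (hno C hC); rewrite hCQ /= => ->.
Qed.

End Final.

Theorem theorem3p2 (T : finType) (e : rel T) (p : nat) :
  symmetric e -> irreflexive e ->
  interval_graph e -> connected_graph e ->
  balanced e -> critical e p ->
  exists! z : T, basepoint e z.
Proof.
move=> esym eirr hig hconn hbal hcr.
have hcr' := hcr; case: hcr' => [hp0 [hip _]].
have hG : wtG e = p := has_imp_uniq hbal hip.
have [z0 hz0] : exists z0, wt e z0 = p.
  case: (pickP (fun _ : T => true)) => [z1 _|h].
    have hc : 0 < #|T| by apply/card_gt0P; exists z1.
    have [z0 h0] := eq_bigmax (fun z => wt e z) hc.
    by exists z0; rewrite -h0.
  exfalso; move: hG; rewrite /wtG big_pred0 // => h0.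
  by rewrite -h0 in hp0.
exists z0; split.
  by split => //; rewrite hz0.
move=> z' [_ hz'].
have wz' : wt e z' = p := has_imp_uniq hz' hip.
apply/eqP; rewrite eq_sym; apply/negP => /negP zz.
have hpos : 0 < wt e z' by rewrite wz'.
have := Q_nonext esym hconn zz (main esym eirr hconn hcr hig hz0 zz hpos).
by rewrite wz' => h; rewrite h in hp0.
Qed.
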